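(* For the triangle query $Q=R(A,B)\bowtie S(B,C)\bowtie T(C,A)$ with $|R|,|S|,|T|\le IN$, there is a vertex-centric BSP algorithm on $\mathrm{TAG}(D)$ that computes $Q(D)$ with total communication cost and total computation cost $O(IN^{3/2})$.
   Context: Vertex-centric BSP model: computation runs on a graph in which every vertex acts as a processor holding a local state, its incident edges and an incoming message queue. Computation proceeds in supersteps: in each superstep every active vertex reads the messages it received, performs local computation, and sends messages either along its incident edges or directly to any vertex whose identifier it knows (in particular to designated global aggregator vertices whose identifiers are known to all vertices); a synchronization barrier follows. Messages sent in superstep $i$ are delivered at the start of superstep $i+1$, and only vertices that received a message are active in superstep $i+1$. The computation ends when no messages are sent; its output is the union of the values output by the vertices. Total communication cost is the total amount of data sent in messages over all vertices and supersteps (a message carrying a vertex identifier or a constant number of attribute values counts $O(1)$; a message carrying a set of tuples counts the number of tuples). Total computation cost is the total number of elementary operations performed by all vertices over all supersteps. All complexities are data complexities: the query and schema are fixed and constants may depend on them. TAG encoding: for a relational database $D$, $\mathrm{TAG}(D)$ is the undirected bipartite graph with vertex and edge labels having (1) one tuple vertex $v_t$ labeled $R$ for each occurrence of a tuple $t$ in relation $R$ (duplicate occurrences get distinct vertices), storing $t$; (2) exactly one attribute vertex $v_a$ for each value $a$ of the active domain of $D$, regardless of how many times and in which attributes $a$ occurs; (3) for each occurrence of an $R$-tuple $t$ whose attribute $A$ has value $a$, an edge between $v_t$ and $v_a$ labeled $R.A$. Messages may be sent along an edge in either direction. *)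

(* Defs.v *)
From Stdlib Require Import List Arith PeanoNat Bool.
Import ListNotations.

(* Data values are natural numbers; relations are bags (lists) so that   *)
(* duplicate occurrences are distinct tuple occurrences.                 *)
Record db := mkDB { dbR : list (nat * nat);    (* R(A,B) *)
                    dbS : list (nat * nat);    (* S(B,C) *)
                    dbT : list (nat * nat) }.  (* T(C,A) *)

Definition in_Q (D : db) (a b c : nat) : Prop :=
  In (a, b) (dbR D) /\ In (b, c) (dbS D) /\ In (c, a) (dbT D).

Inductive lab :=
| LR | LS | LT                             (* tuple-vertex labels          *)
| LRA | LRB | LSB | LSC | LTC | LTA        (* edge labels  R.A, R.B, ...   *)
| LAttr | LAgg.                           (* attribute / aggregator kinds *)

Inductive vid := VAttr (a : nat) | VTup (i : nat) | VAgg (k : nat).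

(* The atomic contents of registers and messages.  Programs can only test
   atoms for equality (and compare / add / multiply [ANat] counters). *)
Inductive atom := AData (a : nat) | AVid (v : vid) | ANat (n : nat) | ALab (l : lab).

Definition atom_eq_dec (x y : atom) : {x = y} + {x <> y}.
Proof. repeat decide equality. Defined.
Definition atom_eqb (x y : atom) : bool := if atom_eq_dec x y then true else false.

Fixpoint atoms_eqb (x y : list atom) : bool :=
  match x, y with
  | [], [] => true
  | a :: x', b :: y' => atom_eqb a b && atoms_eqb x' y'
  | _, _ => false
  end.

(* Registers and tables are indexed by nat.  Tuples (keys, table values, *)
(* messages, outputs) are lists of registers written in the program, so *)
(* their arity is a constant fixed by the program.  Tables are hash     *)
(* multimaps from keys to bags of tuples with O(1) insert / membership  *)
(* / count, and iteration costing 1 per element.                       *)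
Inductive expr :=
| EReg (r : nat)
| ENat (n : nat)
| ELab (l : lab)
| EAgg (k : nat)
| ESelf
| EKind
| EField (i : nat)
| EAdd (e1 e2 : expr)
| EMul (e1 e2 : expr)
| ECount (t : nat) (key : list nat).

Inductive cond :=
| CTrue
| CEq (e1 e2 : expr)
| CLe (e1 e2 : expr)
| CMem (t : nat) (key : list nat)
| CNot (c : cond)
| CAnd (c1 c2 : cond).

Inductive stmt :=
| SSkip
| SSeq (s1 s2 : stmt)
| SAssign (r : nat) (e : expr)
| SIf (c : cond) (s1 s2 : stmt)
| SInsert (t : nat) (key vals : list nat)
| SSend (dest : nat) (msg : list nat)      (* send tuple of registers to the
                                              vertex whose id is in [dest] *)
| SOutput (tup : list nat)
| SForInbox (rs : list nat) (body : stmt)  (* bind fields of each message *)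
| SForEdges (rl rn : nat) (body : stmt)    (* bind edge label / neighbour id *)
| SForVals (t : nat) (key : list nat) (rs : list nat) (body : stmt)
| SForKeys (t : nat) (rs : list nat) (body : stmt).

Fixpoint esize (e : expr) : nat :=
  match e with
  | EAdd e1 e2 | EMul e1 e2 => S (esize e1 + esize e2)
  | ECount _ k => S (length k)
  | _ => 1
  end.

Fixpoint csize (c : cond) : nat :=
  match c with
  | CEq e1 e2 | CLe e1 e2 => S (esize e1 + esize e2)
  | CMem _ k => S (length k)
  | CNot c => S (csize c)
  | CAnd c1 c2 => S (csize c1 + csize c2)
  | CTrue => 1
  end.

(* local state: registers and tables (persistent across supersteps) *)
Definition table := list (list atom * list (list atom)).
Record lstate := mkL { regs : nat -> atom; tabs : nat -> table }.

Definition init_lstate : lstate := mkL (fun _ => ANat 0) (fun _ => []).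

Record vinfo := mkV { vself : vid; vkind : lab; vfields : list nat;
                      vedges : list (lab * vid) }.

Fixpoint tlookup (tb : table) (k : list atom) : list (list atom) :=
  match tb with
  | [] => []
  | (k', vs) :: tb' => if atoms_eqb k k' then vs else tlookup tb' k
  end.

Fixpoint tinsert (tb : table) (k : list atom) (v : list atom) : table :=
  match tb with
  | [] => [(k, [v])]
  | (k', vs) :: tb' =>
      if atoms_eqb k k' then (k', vs ++ [v]) :: tb' else (k', vs) :: tinsert tb' k v
  end.

Definition nat_of_atom (a : atom) : option nat :=
  match a with ANat n => Some n | _ => None end.

Fixpoint evale (V : vinfo) (st : lstate) (e : expr) : atom :=
  match e with
  | EReg r => regs st r
  | ENat n => ANat n
  | ELab l => ALab l
  | EAgg k => AVid (VAgg k)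
  | ESelf => AVid (vself V)
  | EKind => ALab (vkind V)
  | EField i => match nth_error (vfields V) i with
                | Some a => AData a | None => ANat 0 end
  | EAdd e1 e2 => match nat_of_atom (evale V st e1), nat_of_atom (evale V st e2) with
                  | Some x, Some y => ANat (x + y) | _, _ => ANat 0 end
  | EMul e1 e2 => match nat_of_atom (evale V st e1), nat_of_atom (evale V st e2) with
                  | Some x, Some y => ANat (x * y) | _, _ => ANat 0 end
  | ECount t k => ANat (length (tlookup (tabs st t) (map (regs st) k)))
  end.

Fixpoint evalc (V : vinfo) (st : lstate) (c : cond) : bool :=
  match c with
  | CTrue => true
  | CEq e1 e2 => atom_eqb (evale V st e1) (evale V st e2)
  | CLe e1 e2 => match nat_of_atom (evale V st e1), nat_of_atom (evale V st e2) with
                 | Some x, Some y => Nat.leb x y | _, _ => false end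
  | CMem t k => existsb (fun kv => atoms_eqb (map (regs st) k) (fst kv)) (tabs st t)
  | CNot c => negb (evalc V st c)
  | CAnd c1 c2 => evalc V st c1 && evalc V st c2
  end.

Definition setreg (st : lstate) (r : nat) (a : atom) : lstate :=
  mkL (fun r' => if Nat.eqb r' r then a else regs st r') (tabs st).

Fixpoint setregs (st : lstate) (rs : list nat) (m : list atom) : lstate :=
  match rs with
  | [] => st
  | r :: rs' => setregs (setreg st r (nth 0 m (ANat 0))) rs' (tl m)
  end.

Record acc := mkAcc { ast : lstate; asent : list (atom * list atom);
                      aout : list (list atom); acost : nat }.

Definition charge (n : nat) (a : acc) : acc :=
  mkAcc (ast a) (asent a) (aout a) (acost a + n).
Definition with_st (st : lstate) (a : acc) : acc :=
  mkAcc st (asent a) (aout a) (acost a).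

Fixpoint exec (V : vinfo) (inbox : list (list atom)) (s : stmt) (a : acc) : acc :=
  match s with
  | SSkip => charge 1 a
  | SSeq s1 s2 => exec V inbox s2 (exec V inbox s1 a)
  | SAssign r e =>
      charge (S (esize e)) (with_st (setreg (ast a) r (evale V (ast a) e)) a)
  | SIf c s1 s2 =>
      let a' := charge (S (csize c)) a in
      if evalc V (ast a) c then exec V inbox s1 a' else exec V inbox s2 a'
  | SInsert t k vs =>
      let st := ast a in
      let st' := mkL (regs st)
                   (fun t' => if Nat.eqb t' t
                              then tinsert (tabs st t) (map (regs st) k) (map (regs st) vs)
                              else tabs st t') in
      charge (S (length k + length vs)) (with_st st' a)
  | SSend d m =>
      let st := ast a in
      mkAcc st (asent a ++ [(regs st d, map (regs st) m)]) (aout a)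
            (acost a + S (length m))
  | SOutput tp =>
      let st := ast a in
      mkAcc st (asent a) (aout a ++ [map (regs st) tp]) (acost a + S (length tp))
  | SForInbox rs b =>
      fold_left (fun a0 m => exec V inbox b
                   (charge (S (length rs)) (with_st (setregs (ast a0) rs m) a0)))
                inbox (charge 1 a)
  | SForEdges rl rn b =>
      fold_left (fun a0 ed => exec V inbox b
                   (charge 3 (with_st (setreg (setreg (ast a0) rl (ALab (fst ed)))
                                                rn (AVid (snd ed))) a0)))
                (vedges V) (charge 1 a)
  | SForVals t k rs b =>
      fold_left (fun a0 m => exec V inbox b
                   (charge (S (length rs)) (with_st (setregs (ast a0) rs m) a0)))
                (tlookup (tabs (ast a) t) (map (regs (ast a)) k))
                (charge (S (length k)) a)
  | SForKeys t rs b =>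
      fold_left (fun a0 m => exec V inbox b
                   (charge (S (length rs)) (with_st (setregs (ast a0) rs m) a0)))
                (map fst (tabs (ast a) t)) (charge 1 a)
  end.

(* A vertex-centric program: a fixed number of global aggregator vertices
   and one local program run by every active vertex in every superstep. *)
Record program := mkProg { nagg : nat; pbody : stmt }.

(* Tuple vertices: R-occurrences numbered 0..|R|-1, then S, then T.      *)
Definition tuple_vertices (D : db) : list vinfo :=
  let nR := length (dbR D) in
  let nS := length (dbS D) in
  map (fun ip => let '(i, (a, b)) := ip in
                 mkV (VTup i) LR [a; b] [(LRA, VAttr a); (LRB, VAttr b)])
      (combine (seq 0 nR) (dbR D)) ++
  map (fun ip => let '(i, (b, c)) := ip in
                 mkV (VTup (nR + i)) LS [b; c] [(LSB, VAttr b); (LSC, VAttr c)])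
      (combine (seq 0 nS) (dbS D)) ++
  map (fun ip => let '(i, (c, a)) := ip in
                 mkV (VTup (nR + nS + i)) LT [c; a] [(LTC, VAttr c); (LTA, VAttr a)])
      (combine (seq 0 (length (dbT D))) (dbT D)).

Definition tag_edges (D : db) : list (vid * lab * nat) :=
  flat_map (fun v => map (fun e => (vself v, fst e,
                                    match snd e with VAttr a => a | _ => 0 end))
                         (vedges v))
           (tuple_vertices D).

Fixpoint nodup_nat (l : list nat) : list nat :=
  match l with
  | [] => []
  | x :: l' => if existsb (Nat.eqb x) l' then nodup_nat l' else x :: nodup_nat l'
  end.

Definition adom (D : db) : list nat :=
  nodup_nat (map (fun e => let '(_, _, a) := e in a) (tag_edges D)).

Definition attr_vertices (D : db) : list vinfo :=
  map (fun a => mkV (VAttr a) LAttr [a]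
                  (flat_map (fun e => let '(t, l, a') := e in
                                      if Nat.eqb a a' then [(l, t)] else [])
                            (tag_edges D)))
      (adom D).

Definition agg_vertices (k : nat) : list vinfo :=
  map (fun i => mkV (VAgg i) LAgg [] []) (seq 0 k).

Definition all_vertices (P : program) (D : db) : list vinfo :=
  tuple_vertices D ++ attr_vertices D ++ agg_vertices (nagg P).

Definition vid_eqb (v w : vid) : bool := atom_eqb (AVid v) (AVid w).

Definition inbox_of (v : vinfo) (msgs : list (atom * list atom)) : list (list atom) :=
  map snd (filter (fun m => atom_eqb (fst m) (AVid (vself v))) msgs).

Fixpoint superstep (P : program) (first : bool) (msgs : list (atom * list atom))
         (vs : list vinfo) (sts : list lstate)
  : list lstate * list (atom * list atom) * list (list atom) * nat :=
  match vs, sts with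
  | v :: vs', st :: sts' =>
      let '(sts'', sent, outs, cost) := superstep P first msgs vs' sts' in
      let inb := inbox_of v msgs in
      if first || negb (match inb with [] => true | _ => false end) then
        let r := exec v inb (pbody P) (mkAcc st [] [] 0) in
        (ast r :: sts'', asent r ++ sent, aout r ++ outs, acost r + cost)
      else (st :: sts'', sent, outs, cost)
  | _, _ => ([], [], [], 0)
  end.

(* Runs at most [fuel] supersteps; [Some (outputs, comm, comp)] if the
   computation ended (a superstep sent no message).  Every message carries a
   program-bounded number of atoms, so it costs 1 unit of communication. *)
Fixpoint run (fuel : nat) (P : program) (vs : list vinfo) (first : bool)
         (sts : list lstate) (msgs : list (atom * list atom))
  : option (list (list atom) * nat * nat) :=
  match fuel with
  | 0 => None
  | S f =>
      let '(sts', sent, outs, cost) := superstep P first msgs vs sts in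
      match sent with
      | [] => Some (outs, 0, cost)
      | _ => match run f P vs false sts' sent with
             | Some (o, cm, cp) => Some (outs ++ o, length sent + cm, cost + cp)
             | None => None
             end
      end
  end.

Definition runs_on (P : program) (D : db) (outs : list (list atom)) (comm comp : nat) : Prop :=
  exists fuel,
    let vs := all_vertices P D in
    run fuel P vs true (map (fun _ => init_lstate) vs) [] = Some (outs, comm, comp).

(* Main.v *)
Require Import Defs.
From Stdlib Require Import List Arith Lia Bool.
Import ListNotations.

Lemma atom_eqb_spec x y : atom_eqb x y = true <-> x = y.
Proof. unfold atom_eqb; destruct (atom_eq_dec x y); split; congruence. Qed.

Lemma atom_eqb_refl x : atom_eqb x x = true.
Proof. apply atom_eqb_spec; auto. Qed.

Lemma atoms_eqb_spec x y : atoms_eqb x y = true <-> x = y.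
Proof.
  revert y; induction x as [|a x IH]; destruct y as [|b y]; simpl; try (split; congruence).
  rewrite andb_true_iff, atom_eqb_spec, IH. split; [intros [-> ->]; auto | intros H; inversion H; auto].
Qed.

Lemma atoms_eqb_sym x y : atoms_eqb x y = atoms_eqb y x.
Proof.
  destruct (atoms_eqb x y) eqn:E; destruct (atoms_eqb y x) eqn:F; auto.
  - apply atoms_eqb_spec in E; subst. rewrite (proj2 (atoms_eqb_spec _ _) eq_refl) in F; discriminate.
  - apply atoms_eqb_spec in F; subst. rewrite (proj2 (atoms_eqb_spec _ _) eq_refl) in E; discriminate.
Qed.

Definition memb (tb : table) (k : list atom) : bool :=
  existsb (fun kv => atoms_eqb k (fst kv)) tb.

Lemma tlookup_tinsert tb k v k' :
  tlookup (tinsert tb k v) k' = tlookup tb k' ++ (if atoms_eqb k' k then [v] else []).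
Proof.
  induction tb as [|[k0 vs] tb IH]; simpl.
  - destruct (atoms_eqb k' k); auto.
  - destruct (atoms_eqb k k0) eqn:E.
    + apply atoms_eqb_spec in E; subst. simpl.
      destruct (atoms_eqb k' k0); simpl; rewrite ?app_nil_r; auto.
    + simpl. destruct (atoms_eqb k' k0) eqn:F; auto.
      apply atoms_eqb_spec in F; subst. rewrite atoms_eqb_sym, E, app_nil_r; auto.
Qed.

Lemma memb_tinsert tb k v k' :
  memb (tinsert tb k v) k' = atoms_eqb k' k || memb tb k'.
Proof.
  unfold memb; induction tb as [|[k0 vs] tb IH]; simpl.
  - rewrite orb_false_r; auto.
  - destruct (atoms_eqb k k0) eqn:E.
    + apply atoms_eqb_spec in E; subst. simpl.
      destruct (atoms_eqb k' k0); simpl; auto.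
    + simpl. rewrite IH. destruct (atoms_eqb k' k0), (atoms_eqb k' k); auto.
Qed.

Lemma atoms_eqb_data2 a b c d : atoms_eqb [AData a; AData b] [AData c; AData d] = (a =? c) && (b =? d).
Proof.
  destruct (atoms_eqb _ _) eqn:E.
  - apply atoms_eqb_spec in E; inversion E; subst; rewrite !Nat.eqb_refl; auto.
  - destruct (a =? c) eqn:F1, (b =? d) eqn:F2; auto.
    apply Nat.eqb_eq in F1, F2; subst. rewrite (proj2 (atoms_eqb_spec _ _) eq_refl) in E; discriminate.
Qed.

Lemma atoms_eqb_data1 a c : atoms_eqb [AData a] [AData c] = (a =? c).
Proof.
  destruct (atoms_eqb _ _) eqn:E.
  - apply atoms_eqb_spec in E; inversion E; subst; rewrite !Nat.eqb_refl; auto.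
  - destruct (a =? c) eqn:F1; auto.
    apply Nat.eqb_eq in F1; subst. rewrite (proj2 (atoms_eqb_spec _ _) eq_refl) in E; discriminate.
Qed.

Definition BODY1 := SIf (CEq (EReg 1) (ELab LS)) (SSeq (SInsert 0 [2] [3]) (SInsert 4 [2;3] []))
          (SIf (CEq (EReg 1) (ELab LT)) (SSeq (SInsert 1 [3] [2]) (SInsert 2 [2;3] [])) SSkip).
Definition JOIN := SIf (CLe (ECount 0 [3]) (ECount 1 [2]))
          (SForVals 0 [3] [4] (SIf (CMem 2 [4;2]) (SOutput [2;3;4]) SSkip))
          (SForVals 1 [2] [4] (SIf (CMem 4 [3;4]) (SOutput [2;3;4]) SSkip)).
Definition BODY2 := SIf (CEq (EReg 1) (ELab LR)) (SIf (CMem 3 [2;3]) SSkip (SSeq (SInsert 3 [2;3] []) JOIN)) SSkip.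
Definition AGG := SSeq (SForInbox [1;2;3] BODY1) (SForInbox [1;2;3] BODY2).
Definition SEND := SSeq (SAssign 0 (EAgg 0)) (SSeq (SAssign 1 EKind) (SSeq (SAssign 2 (EField 0))
                    (SSeq (SAssign 3 (EField 1)) (SSend 0 [1;2;3])))).
Definition PROG := SIf (CEq EKind (ELab LAgg)) AGG (SIf (CEq EKind (ELab LAttr)) SSkip SEND).
Definition P0 := mkProg 1 PROG.

Definition msg (m : lab * nat * nat) : list atom :=
  let '(l, x, y) := m in [ALab l; AData x; AData y].

Definition isS (l : lab) := match l with LS => true | _ => false end.
Definition isT (l : lab) := match l with LT => true | _ => false end.
Definition isR (l : lab) := match l with LR => true | _ => false end.

Definition F0 (ms : list (lab*nat*nat)) k :=
  flat_map (fun m => let '(l,x,y) := m in if isS l && atoms_eqb k [AData x] then [[AData y]] else []) ms.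
Definition F1 (ms : list (lab*nat*nat)) k :=
  flat_map (fun m => let '(l,x,y) := m in if isT l && atoms_eqb k [AData y] then [[AData x]] else []) ms.
Definition M2 (ms : list (lab*nat*nat)) k :=
  existsb (fun m => let '(l,x,y) := m in isT l && atoms_eqb k [AData x; AData y]) ms.
Definition M4 (ms : list (lab*nat*nat)) k :=
  existsb (fun m => let '(l,x,y) := m in isS l && atoms_eqb k [AData x; AData y]) ms.

Definition step1 V inb := (fun a0 m => exec V inb BODY1 (charge (S (length [1;2;3])) (with_st (setregs (ast a0) [1;2;3] m) a0))).

Lemma loop1 V inb ms a0 :
  let a1 := fold_left (step1 V inb) (map msg ms) a0 in
  asent a1 = asent a0 /\ aout a1 = aout a0 /\ acost a1 <= acost a0 + 20 * length ms /\
  (forall k, tlookup (tabs (ast a1) 0) k = tlookup (tabs (ast a0) 0) k ++ F0 ms k) /\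
  (forall k, tlookup (tabs (ast a1) 1) k = tlookup (tabs (ast a0) 1) k ++ F1 ms k) /\
  (forall k, memb (tabs (ast a1) 2) k = memb (tabs (ast a0) 2) k || M2 ms k) /\
  (forall k, memb (tabs (ast a1) 4) k = memb (tabs (ast a0) 4) k || M4 ms k) /\
  tabs (ast a1) 3 = tabs (ast a0) 3.
Proof.
  revert a0; induction ms as [|[[l x] y] ms IH]; intros a0; cbn [map fold_left length].
  - unfold F0, F1, M2, M4; simpl; repeat split; intros; rewrite ?app_nil_r, ?orb_false_r; auto; lia.
  - destruct (IH (step1 V inb a0 (msg (l,x,y)))) as (H1&H2&H3&H4&H5&H6&H7&H8).
    cbv zeta in *. change (fold_left (step1 V inb) (msg (l,x,y) :: map msg ms) a0) with
      (fold_left (step1 V inb) (map msg ms) (step1 V inb a0 (msg (l,x,y)))).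
    revert H1 H2 H3 H4 H5 H6 H7 H8.
    generalize (fold_left (step1 V inb) (map msg ms) (step1 V inb a0 (msg (l,x,y)))).
    intros a1 H1 H2 H3 H4 H5 H6 H7 H8.
    rewrite H1, H2, H8.
    repeat split; try (intros k; rewrite ?H4, ?H5, ?H6, ?H7); try lia; clear H1 H2 H4 H5 H6 H7 H8;
    revert H3; unfold step1; destruct l; simpl; intros;
    rewrite ?tlookup_tinsert, ?memb_tinsert, <- ?app_assoc, ?orb_assoc; auto; try lia.
all: destruct (atoms_eqb _ _), (memb _ _); reflexivity.
Qed.

Definition IB t i j := SIf (CMem t [i;j]) (SOutput [2;3;4]) SSkip.
Definition stepI V inb t i j := (fun a0 m => exec V inb (IB t i j) (charge (S (length [4])) (with_st (setregs (ast a0) [4] m) a0))).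
Definition rv (st : lstate) (m : list atom) r := if r =? 4 then nth 0 m (ANat 0) else regs st r.

Lemma stepI_spec V inb t i j a0 m :
  stepI V inb t i j a0 m =
  if memb (tabs (ast a0) t) [rv (ast a0) m i; rv (ast a0) m j]
  then mkAcc (setreg (ast a0) 4 (nth 0 m (ANat 0))) (asent a0)
         (aout a0 ++ [[regs (ast a0) 2; regs (ast a0) 3; nth 0 m (ANat 0)]]) (acost a0 + 10)
  else mkAcc (setreg (ast a0) 4 (nth 0 m (ANat 0))) (asent a0) (aout a0) (acost a0 + 7).
Proof.
  unfold stepI, IB; simpl. unfold memb, rv; simpl.
  destruct (existsb _ _); unfold charge, with_st; simpl; f_equal; lia.
Qed.

Lemma rv_setreg4 st v m r : rv (setreg st 4 v) m r = rv st m r.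
Proof. unfold rv, setreg; simpl. destruct (r =? 4); auto. Qed.

Lemma inner V inb t i j vals a0 :
  let a1 := fold_left (stepI V inb t i j) vals a0 in
  asent a1 = asent a0 /\ tabs (ast a1) = tabs (ast a0) /\
  regs (ast a1) 2 = regs (ast a0) 2 /\ regs (ast a1) 3 = regs (ast a0) 3 /\
  acost a1 <= acost a0 + 10 * length vals /\
  (forall o, In o (aout a1) <-> In o (aout a0) \/
     exists m, In m vals /\ memb (tabs (ast a0) t) [rv (ast a0) m i; rv (ast a0) m j] = true /\
          o = [regs (ast a0) 2; regs (ast a0) 3; nth 0 m (ANat 0)]).
Proof.
  revert a0; induction vals as [|m vals IH]; intros a0; cbn [fold_left length].
  - repeat split; try lia; [auto | intros [H|(m&[]&_)]; auto].
  - destruct (IH (stepI V inb t i j a0 m)) as (H1&H2&H3&H4&H5&H6).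
    revert H1 H2 H3 H4 H5 H6.
    generalize (fold_left (stepI V inb t i j) vals (stepI V inb t i j a0 m)).
    intros a1 H1 H2 H3 H4 H5 H6.
    rewrite H1, H2, H3, H4. clear H1 H2 H3 H4.
    rewrite stepI_spec in H5, H6 |- *.
    destruct (memb (tabs (ast a0) t) [rv (ast a0) m i; rv (ast a0) m j]) eqn:E; simpl in H5, H6 |- *;
      setoid_rewrite rv_setreg4 in H6;
      repeat match goal with |- _ /\ _ => split end; try lia; try reflexivity.
    + intros o; rewrite H6, in_app_iff; simpl. split.
      * intros [[H|[H|[]]]|(m'&Hm&Hb&Ho)]; auto.
        -- right; exists m; split; auto.
        -- right; exists m'; auto.
      * intros [H|(m'&[Hm|Hm]&Hb&Ho)]; auto.
        -- subst m'; left; right; left; auto.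
        -- right; exists m'; auto.
    + intros o; rewrite H6; split.
      * intros [H|(m'&Hm&Hb&Ho)]; auto. right; exists m'; auto.
      * intros [H|(m'&[Hm|Hm]&Hb&Ho)]; auto.
        -- subst m'. congruence.
        -- right; exists m'; auto.
Qed.


Definition sx (T0 : table) b := length (tlookup T0 [AData b]).
Definition ty (T1 : table) a := length (tlookup T1 [AData a]).
Definition jc (T0 T1 T2 T4 : table) a b (c : atom) : Prop :=
  if sx T0 b <=? ty T1 a
  then exists m, In m (tlookup T0 [AData b]) /\ memb T2 [nth 0 m (ANat 0); AData a] = true /\ c = nth 0 m (ANat 0)
  else exists m, In m (tlookup T1 [AData a]) /\ memb T4 [AData b; nth 0 m (ANat 0)] = true /\ c = nth 0 m (ANat 0).

Lemma JOIN_unfold V inb a :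
  exec V inb JOIN a =
  if length (tlookup (tabs (ast a) 0) [regs (ast a) 3]) <=? length (tlookup (tabs (ast a) 1) [regs (ast a) 2])
  then fold_left (stepI V inb 2 4 2) (tlookup (tabs (ast a) 0) [regs (ast a) 3]) (charge 2 (charge 6 a))
  else fold_left (stepI V inb 4 3 4) (tlookup (tabs (ast a) 1) [regs (ast a) 2]) (charge 2 (charge 6 a)).
Proof. reflexivity. Qed.

Lemma JOIN_spec V inb a x y :
  regs (ast a) 2 = AData x -> regs (ast a) 3 = AData y ->
  let r := exec V inb JOIN a in
  asent r = asent a /\ tabs (ast r) = tabs (ast a) /\
  acost r <= acost a + 8 + 10 * Nat.min (sx (tabs (ast a) 0) y) (ty (tabs (ast a) 1) x) /\
  (forall o, In o (aout r) <-> In o (aout a) \/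
     exists c, jc (tabs (ast a) 0) (tabs (ast a) 1) (tabs (ast a) 2) (tabs (ast a) 4) x y c /\ o = [AData x; AData y; c]).
Proof.
  intros H2 H3. cbv zeta. rewrite JOIN_unfold, H2, H3. unfold jc, sx, ty.
  destruct (Nat.leb_spec (length (tlookup (tabs (ast a) 0) [AData y])) (length (tlookup (tabs (ast a) 1) [AData x]))) as [Hle|Hlt].
  - destruct (inner V inb 2 4 2 (tlookup (tabs (ast a) 0) [AData y]) (charge 2 (charge 6 a))) as (K1&K2&K3&K4&K5&K6).
    cbv zeta in *. rewrite K1, K2. simpl in *. repeat split; auto.
    + rewrite Nat.min_l by lia. lia.
    + intros Ho. apply K6 in Ho. destruct Ho as [Ho|(m&Hm&Hb&Ho)]; auto.
      right. exists (nth 0 m (ANat 0)). split; [exists m; unfold rv in Hb; simpl in Hb; rewrite ?H2 in Hb; auto|].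
      rewrite Ho, ?H2, ?H3; auto.
    + intros Ho. apply K6. destruct Ho as [Ho|(c&(m&Hm&Hb&Hc)&Ho)]; auto.
      right. exists m; split; auto. unfold rv; simpl; rewrite ?H2; split; auto. rewrite Ho, ?H2, ?H3, Hc; auto.
  - destruct (inner V inb 4 3 4 (tlookup (tabs (ast a) 1) [AData x]) (charge 2 (charge 6 a))) as (K1&K2&K3&K4&K5&K6).
    cbv zeta in *. rewrite K1, K2. simpl in *. repeat split; auto.
    + rewrite Nat.min_r by lia. lia.
    + intros Ho. apply K6 in Ho. destruct Ho as [Ho|(m&Hm&Hb&Ho)]; auto.
      right. exists (nth 0 m (ANat 0)). split; [exists m; unfold rv in Hb; simpl in Hb; rewrite ?H3 in Hb; auto|].
      rewrite Ho, ?H2, ?H3; auto.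
    + intros Ho. apply K6. destruct Ho as [Ho|(c&(m&Hm&Hb&Hc)&Ho)]; auto.
      right. exists m; split; auto. unfold rv; simpl; rewrite ?H3; split; auto. rewrite Ho, ?H2, ?H3, Hc; auto.
Qed.

Definition step2 V inb := (fun a0 m => exec V inb BODY2 (charge (S (length [1;2;3])) (with_st (setregs (ast a0) [1;2;3] m) a0))).

Definition st3 (a : acc) x y := setreg (setreg (setreg (ast a) 1 (ALab LR)) 2 (AData x)) 3 (AData y).

Lemma step2_R V inb a x y :
  step2 V inb a (msg (LR,x,y)) =
  if memb (tabs (ast a) 3) [AData x; AData y]
  then charge 1 (charge 4 (charge 4 (charge 4 (with_st (st3 a x y) a))))
  else exec V inb JOIN (charge 3 (with_st (mkL (regs (st3 a x y))
          (fun t' => if t' =? 3 then tinsert (tabs (ast a) 3) [AData x; AData y] [] else tabs (ast a) t'))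
          (charge 4 (charge 4 (charge 4 (with_st (st3 a x y) a)))))).
Proof. reflexivity. Qed.

Lemma step2_other V inb a l x y : l <> LR ->
  let r := step2 V inb a (msg (l,x,y)) in
  asent r = asent a /\ aout r = aout a /\ tabs (ast r) = tabs (ast a) /\ acost r <= acost a + 20.
Proof. intros H; destruct l; try congruence; simpl; repeat split; lia. Qed.

Lemma loop2 V inb T0 T1 T2 T4 ms : forall a0,
  tabs (ast a0) 0 = T0 -> tabs (ast a0) 1 = T1 -> tabs (ast a0) 2 = T2 -> tabs (ast a0) 4 = T4 ->
  let a1 := fold_left (step2 V inb) (map msg ms) a0 in
  asent a1 = asent a0 /\
  (forall o, In o (aout a1) <-> In o (aout a0) \/ exists x y c, In (LR,x,y) ms /\
      memb (tabs (ast a0) 3) [AData x; AData y] = false /\ jc T0 T1 T2 T4 x y c /\ o = [AData x; AData y; c]) /\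
  exists L, NoDup L /\ (forall p, In p L -> In (LR, fst p, snd p) ms /\
      memb (tabs (ast a0) 3) [AData (fst p); AData (snd p)] = false) /\
   acost a1 <= acost a0 + 40 * length ms + 10 * list_sum (map (fun p => Nat.min (sx T0 (snd p)) (ty T1 (fst p))) L).
Proof.
  induction ms as [|[[l x] y] ms IH]; intros a0 E0 E1 E2 E4; cbn [map fold_left length].
  - split; auto. split.
    + intros o; split; auto. intros [H|(x&y&c&[]&_)]; auto.
    + exists []; simpl; repeat split; auto using NoDup_nil; try lia; intros p [].
  - assert (Hdec : forall a b : lab, {a = b} + {a <> b}) by decide equality.
    destruct (Hdec l LR) as [->|Hl].
    + rewrite step2_R. destruct (memb (tabs (ast a0) 3) [AData x; AData y]) eqn:Em.
      * set (a' := charge 1 _).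
        assert (Hs : tabs (ast a') = tabs (ast a0)) by reflexivity.
        destruct (IH a') as (H1&H2&L&HL1&HL2&HL3); try (rewrite Hs; assumption).
        split; [rewrite H1; reflexivity|]. split.
        -- intros o; rewrite H2; rewrite Hs. simpl aout. split.
           ++ intros [H|(x'&y'&c&Hi&Hm&Hj&Ho)]; auto. right; exists x', y', c; simpl; auto.
           ++ intros [H|(x'&y'&c&[Hi|Hi]&Hm&Hj&Ho)]; auto.
              ** inversion Hi; subst. congruence.
              ** right; exists x', y', c; auto.
        -- exists L; split; auto. split.
           ++ intros p Hp. rewrite <- Hs. destruct (HL2 p Hp); simpl; auto.
           ++ simpl in HL3. lia.
      * set (a'' := charge 3 _).
        destruct (JOIN_spec V inb a'' x y eq_refl eq_refl) as (J1&J2&J3&J4).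
        cbv zeta in *. set (a' := exec V inb JOIN a'') in *.
        assert (Ht : forall t, t <> 3 -> tabs (ast a') t = tabs (ast a0) t).
        { intros t Ht; rewrite J2. simpl. apply Nat.eqb_neq in Ht. rewrite Ht. auto. }
        assert (Ht3 : forall p1 p2, memb (tabs (ast a') 3) [AData p1; AData p2] =
                   ((p1 =? x) && (p2 =? y)) || memb (tabs (ast a0) 3) [AData p1; AData p2]).
        { intros; rewrite J2; simpl. rewrite memb_tinsert, atoms_eqb_data2; auto. }
        destruct (IH a') as (H1&H2&L&HL1&HL2&HL3); try (rewrite Ht; [assumption|lia]).
        assert (Hjc : forall c, jc (tabs (ast a'') 0) (tabs (ast a'') 1) (tabs (ast a'') 2) (tabs (ast a'') 4) x y c <-> jc T0 T1 T2 T4 x y c).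
        { intros c. subst a''. simpl. rewrite E0, E1, E2, E4. tauto. }
        split; [rewrite H1, J1; reflexivity|]. split.
        -- intros o; rewrite H2, J4. split.
           ++ intros [[H|(c&Hj&Ho)]|(x'&y'&c&Hi&Hm&Hj&Ho)].
              ** left; exact H.
              ** right; exists x, y, c. rewrite <- Hjc. simpl; auto.
              ** right; exists x', y', c. rewrite Ht3 in Hm. apply orb_false_iff in Hm. simpl; tauto.
           ++ intros [H|(x'&y'&c&[Hi|Hi]&Hm&Hj&Ho)]; [left; left; exact H| |].
              ** inversion Hi; subst x' y'. left; right. exists c; rewrite Hjc; auto.
              ** destruct ((x' =? x) && (y' =? y)) eqn:Exy.
                 --- apply andb_true_iff in Exy as [X1 X2]. apply Nat.eqb_eq in X1, X2; subst.
                     left; right; exists c; rewrite Hjc; auto.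
                 --- right; exists x', y', c; rewrite Ht3, Exy, Hm; auto.
        -- exists ((x,y) :: L). split; [|split].
           ++ constructor; auto. intros Hin. destruct (HL2 _ Hin) as [_ Hm]. simpl in Hm.
              rewrite Ht3, !Nat.eqb_refl in Hm. discriminate.
           ++ intros p [<-|Hp]; simpl; auto.
              destruct (HL2 p Hp) as [Hi Hm]. rewrite Ht3 in Hm. apply orb_false_iff in Hm. tauto.
           ++ assert (Ha : acost a'' <= acost a0 + 20) by (subst a''; simpl; lia).
              assert (Ta0 : tabs (ast a'') 0 = T0) by (subst a''; simpl; exact E0).
              assert (Ta1 : tabs (ast a'') 1 = T1) by (subst a''; simpl; exact E1).
              rewrite Ta0, Ta1 in J3. cbn [map fst snd]. change (list_sum (?h :: ?t)) with (h + list_sum t). lia.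
    + destruct (step2_other V inb a0 l x y Hl) as (S1&S2&S3&S4).
      cbv zeta in *. set (a' := step2 V inb a0 (msg (l,x,y))) in *.
      destruct (IH a') as (H1&H2&L&HL1&HL2&HL3); try (rewrite S3; assumption).
      split; [rewrite H1, S1; reflexivity|]. split.
      * intros o; rewrite H2, S2, S3. split.
        -- intros [H|(x'&y'&c&Hi&Hm&Hj&Ho)]; auto. right; exists x', y', c; simpl; auto.
        -- intros [H|(x'&y'&c&[Hi|Hi]&Hm&Hj&Ho)]; auto.
           ++ inversion Hi; congruence.
           ++ right; exists x', y', c; auto.
      * exists L; split; auto. split.
        -- intros p Hp. rewrite <- S3. destruct (HL2 p Hp); simpl; auto.
        -- lia.
Qed.

Definition cS (S : list (nat*nat)) b := length (filter (fun s => fst s =? b) S).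
Definition cT (T : list (nat*nat)) a := length (filter (fun t => snd t =? a) T).

Lemma list_sum_map_add {A} (f g : A -> nat) L :
  list_sum (map (fun p => f p + g p) L) = list_sum (map f L) + list_sum (map g L).
Proof. induction L; simpl; auto. rewrite IHL; lia. Qed.

Lemma list_sum_map_le {A} (f g : A -> nat) L :
  (forall p, In p L -> f p <= g p) -> list_sum (map f L) <= list_sum (map g L).
Proof. induction L; simpl; intros H; auto. specialize (IHL (fun p Hp => H p (or_intror Hp))). specialize (H a (or_introl eq_refl)). lia. Qed.

Definition eqp (p q : nat*nat) := (fst p =? fst q) && (snd p =? snd q).

Lemma eqp_true p q : eqp p q = true -> p = q.
Proof. destruct p, q; unfold eqp; simpl; rewrite andb_true_iff, !Nat.eqb_eq; intros [-> ->]; auto. Qed.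

Lemma sum_notin L q : ~ In q L -> list_sum (map (fun p => if eqp p q then 1 else 0) L) = 0.
Proof.
  induction L as [|p L IH]; simpl; auto. intros H.
  destruct (eqp p q) eqn:E. apply eqp_true in E; subst; tauto. rewrite IH; auto.
Qed.

Lemma sum_le1 L q : NoDup L -> list_sum (map (fun p => if eqp p q then 1 else 0) L) <= 1.
Proof.
  induction 1 as [|p L Hn Hd IH]; simpl; auto.
  destruct (eqp p q) eqn:E; simpl; auto.
  apply eqp_true in E; subst. rewrite sum_notin; auto.
Qed.

Lemma sumT L T b : NoDup L ->
  list_sum (map (fun p => if snd p =? b then cT T (fst p) else 0) L) <= length T.
Proof.
  intros HL; induction T as [|t T IH]; simpl.
  - induction L; simpl; auto. inversion HL; subst. destruct (snd a =? b); unfold cT at 1; simpl; auto.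
  - unfold cT; simpl.
    assert (E : forall p, (if snd p =? b then length (filter (fun t0 => snd t0 =? fst p) (t :: T)) else 0)
       = (if eqp p (snd t, b) then 1 else 0) + (if snd p =? b then cT T (fst p) else 0)).
    { intros [p1 p2]; unfold eqp, cT; simpl. destruct (p2 =? b) eqn:E1; simpl; rewrite ?andb_true_r, ?andb_false_r.
      - rewrite (Nat.eqb_sym (snd t) p1). destruct (p1 =? snd t); simpl; auto.
      - auto. }
    rewrite (map_ext _ _ E), list_sum_map_add. pose proof (sum_le1 L (snd t, b) HL). unfold cT in *. lia.
Qed.

Lemma sumST L SS T : NoDup L ->
  list_sum (map (fun p => cS SS (snd p) * cT T (fst p)) L) <= length SS * length T.
Proof.
  intros HL; induction SS as [|s SS IH]; simpl.
  - unfold cS; simpl. induction L; simpl; auto. inversion HL; subst; auto.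
  - assert (E : forall p, cS (s :: SS) (snd p) * cT T (fst p)
       = (if snd p =? fst s then cT T (fst p) else 0) + cS SS (snd p) * cT T (fst p)).
    { intros [p1 p2]; unfold cS; simpl. rewrite (Nat.eqb_sym (fst s) p2). destruct (p2 =? fst s); simpl; lia. }
    rewrite (map_ext _ _ E), list_sum_map_add. pose proof (sumT L T (fst s) HL). lia.
Qed.

Lemma min_bound k x y : k * Nat.min x y <= k * k + x * y.
Proof.
  destruct (Nat.le_gt_cases x k).
  - assert (Nat.min x y <= x) by lia. nia.
  - assert (Nat.min x y <= y) by lia. nia.
Qed.

Lemma key_bound L SS T IN : NoDup L -> length L <= IN -> length SS <= IN -> length T <= IN -> 0 < IN ->
  let X := list_sum (map (fun p => Nat.min (cS SS (snd p)) (cT T (fst p))) L) in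
  X * X <= 16 * IN ^ 3.
Proof.
  intros HL H1 H2 H3 H0 X.
  set (k := Nat.sqrt IN).
  assert (Hk1 : k * k <= IN) by (apply Nat.sqrt_spec; lia).
  assert (Hk2 : IN < S k * S k) by (apply Nat.sqrt_spec; lia).
  assert (Hkx : k * X <= length L * (k * k) + length SS * length T).
  { unfold X. transitivity (list_sum (map (fun p => k * k + cS SS (snd p) * cT T (fst p)) L)).
    - clear. induction L as [|q L IHL]; simpl; [lia|]. pose proof (min_bound k (cS SS (snd q)) (cT T (fst q))). nia.
    - rewrite list_sum_map_add. pose proof (sumST L SS T HL).
      assert (list_sum (map (fun _ : nat * nat => k * k) L) = length L * (k*k)) as ->.
      { clear. induction L; simpl; auto. }
      lia. }
  assert (Hkx2 : k * X <= 2 * IN * IN) by nia.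
  assert (Hk0 : 1 <= k) by (destruct k; simpl in Hk2; lia).
  assert (Hk4 : IN <= 4 * (k * k)).
  { assert (Hs : S k <= 2 * k) by lia. pose proof (Nat.mul_le_mono _ _ _ _ Hs Hs). lia. }
  assert (Hsq : k * X * (k * X) <= (2 * IN * IN) * (2 * IN * IN)) by (apply Nat.mul_le_mono; auto).
  assert (Hm : IN * (X * X) <= 4 * (k * k) * (X * X)) by (apply Nat.mul_le_mono_r; auto).
  assert (Hf : IN * (X * X) <= IN * (16 * IN ^ 3)).
  { replace (IN * (16 * IN ^ 3)) with ((2 * IN * IN) * (2 * IN * IN) * 4) by (simpl; ring).
    replace (4 * (k * k) * (X * X)) with (k * X * (k * X) * 4) in Hm by ring. lia. }
  apply Nat.mul_le_mono_pos_l in Hf; auto.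
Qed.

Lemma atom_eqb_data a b : atom_eqb (AData a) (AData b) = (a =? b).
Proof.
  destruct (atom_eqb _ _) eqn:E; destruct (a =? b) eqn:F; auto.
  - apply atom_eqb_spec in E; inversion E; subst; rewrite Nat.eqb_refl in F; discriminate.
  - apply Nat.eqb_eq in F; subst. rewrite atom_eqb_refl in E; discriminate.
Qed.

Definition trip (D : db) : list (lab*nat*nat) :=
  map (fun p => (LR, fst p, snd p)) (dbR D) ++ map (fun p => (LS, fst p, snd p)) (dbS D)
  ++ map (fun p => (LT, fst p, snd p)) (dbT D).

Lemma F0_trip D b : F0 (trip D) [AData b] = map (fun p => [AData (snd p)]) (filter (fun s => fst s =? b) (dbS D)).
Proof.
  unfold F0, trip. rewrite !flat_map_app.
  assert (HR : forall l, flat_map (fun m : lab*nat*nat => let '(l0, x, y) := m in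
      if isS l0 && atoms_eqb [AData b] [AData x] then [[AData y]] else []) (map (fun p => (LR, fst p, snd p)) l) = []).
  { induction l; simpl; auto. }
  assert (HT : forall l, flat_map (fun m : lab*nat*nat => let '(l0, x, y) := m in
      if isS l0 && atoms_eqb [AData b] [AData x] then [[AData y]] else []) (map (fun p => (LT, fst p, snd p)) l) = []).
  { induction l; simpl; auto. }
  rewrite HR, HT, app_nil_r. simpl. induction (dbS D) as [|[s1 s2] l IH]; simpl; auto.
  rewrite ?atoms_eqb_data1, ?andb_true_r, ?atom_eqb_data, Nat.eqb_sym. destruct (s1 =? b); simpl; rewrite IH; auto.
Qed.

Lemma F1_trip D a : F1 (trip D) [AData a] = map (fun p => [AData (fst p)]) (filter (fun t => snd t =? a) (dbT D)).
Proof.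
  unfold F1, trip. rewrite !flat_map_app.
  assert (HR : forall L l, isT L = false -> flat_map (fun m : lab*nat*nat => let '(l0, x, y) := m in
      if isT l0 && atoms_eqb [AData a] [AData y] then [[AData x]] else []) (map (fun p => (L, fst p, snd p)) l) = []).
  { intros L l HL; induction l; simpl; auto. rewrite HL; simpl; auto. }
  rewrite !HR by reflexivity. simpl. induction (dbT D) as [|[s1 s2] l IH]; simpl; auto.
  rewrite ?atoms_eqb_data1, ?andb_true_r, ?atom_eqb_data, Nat.eqb_sym. destruct (s2 =? a); simpl; rewrite IH; auto.
Qed.

Lemma M2_trip D c a : M2 (trip D) [AData c; AData a] = true <-> In (c, a) (dbT D).
Proof.
  unfold M2, trip. rewrite !existsb_app.
  assert (HR : forall L l, isT L = false -> existsb (fun m : lab*nat*nat => let '(l0, x, y) := m in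
      isT l0 && atoms_eqb [AData c; AData a] [AData x; AData y]) (map (fun p => (L, fst p, snd p)) l) = false).
  { intros L l HL; induction l; simpl; auto. rewrite HL; simpl; auto. }
  rewrite !HR by reflexivity. cbn [orb]. induction (dbT D) as [|[s1 s2] l IH]; cbn [map existsb isT andb fst snd]; [split; [discriminate|intros []]|].
  rewrite ?atoms_eqb_data2, ?andb_true_r, ?atom_eqb_data, orb_true_iff, andb_true_iff, !Nat.eqb_eq, IH. cbn [In].
  split; intros [H|H]; [left; destruct H; subst; auto | auto | left; inversion H; auto | auto].
Qed.

Lemma M4_trip D b c : M4 (trip D) [AData b; AData c] = true <-> In (b, c) (dbS D).
Proof.
  unfold M4, trip. rewrite !existsb_app.
  assert (HR : forall L l, isS L = false -> existsb (fun m : lab*nat*nat => let '(l0, x, y) := m in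
      isS l0 && atoms_eqb [AData b; AData c] [AData x; AData y]) (map (fun p => (L, fst p, snd p)) l) = false).
  { intros L l HL; induction l; simpl; auto. rewrite HL; simpl; auto. }
  rewrite (HR LR), (HR LT) by reflexivity. cbn [orb]. rewrite ?orb_false_r. induction (dbS D) as [|[s1 s2] l IH]; cbn [map existsb isS andb fst snd]; [split; [discriminate|intros []]|].
  rewrite ?atoms_eqb_data2, ?andb_true_r, ?atom_eqb_data, orb_true_iff, andb_true_iff, !Nat.eqb_eq, IH. cbn [In].
  split; intros [H|H]; [left; destruct H; subst; auto | auto | left; inversion H; auto | auto].
Qed.

Lemma R_trip D x y : In (LR, x, y) (trip D) <-> In (x, y) (dbR D).
Proof.
  unfold trip. rewrite !in_app_iff, !in_map_iff. split.
  - intros [([p1 p2]&E&H)|[([p1 p2]&E&H)|([p1 p2]&E&H)]]; simpl in E; inversion E; subst; auto.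
  - intros H. left. exists (x,y); auto.
Qed.

Lemma length_F0 D b : length (F0 (trip D) [AData b]) = cS (dbS D) b.
Proof. rewrite F0_trip, length_map; reflexivity. Qed.
Lemma length_F1 D a : length (F1 (trip D) [AData a]) = cT (dbT D) a.
Proof. rewrite F1_trip, length_map; reflexivity. Qed.

Lemma jc_char D T0 T1 T2 T4 a b c :
  (forall k, tlookup T0 k = F0 (trip D) k) -> (forall k, tlookup T1 k = F1 (trip D) k) ->
  (forall k, memb T2 k = M2 (trip D) k) -> (forall k, memb T4 k = M4 (trip D) k) ->
  jc T0 T1 T2 T4 a b c <-> exists c', c = AData c' /\ In (b, c') (dbS D) /\ In (c', a) (dbT D).
Proof.
  intros H0 H1 H2 H4. unfold jc. destruct (_ <=? _).
  - rewrite H0, F0_trip. split.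
    + intros (m&Hm&Hb&Hc). apply in_map_iff in Hm as ([p1 p2]&<-&Hp). apply filter_In in Hp as [Hp E].
      simpl in *. apply Nat.eqb_eq in E; subst. rewrite H2, M2_trip in Hb. eauto.
    + intros (c'&->&HS&HT). exists [AData c']. split.
      * apply in_map_iff. exists (b, c'); split; auto. apply filter_In; simpl; rewrite Nat.eqb_refl; auto.
      * simpl. rewrite H2, M2_trip; auto.
  - rewrite H1, F1_trip. split.
    + intros (m&Hm&Hb&Hc). apply in_map_iff in Hm as ([p1 p2]&<-&Hp). apply filter_In in Hp as [Hp E].
      simpl in *. apply Nat.eqb_eq in E; subst. rewrite H4, M4_trip in Hb. eauto.
    + intros (c'&->&HS&HT). exists [AData c']. split.
      * apply in_map_iff. exists (c', a); split; auto. apply filter_In; simpl; rewrite Nat.eqb_refl; auto.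
      * simpl. rewrite H4, M4_trip; auto.
Qed.

Definition Vagg := mkV (VAgg 0) LAgg [] [].

Lemma PROG_agg inb a : exec Vagg inb PROG a =
  fold_left (step2 Vagg inb) inb (charge 1 (fold_left (step1 Vagg inb) inb (charge 1 (charge 4 a)))).
Proof. reflexivity. Qed.

Lemma agg_run D a : (forall t, tabs (ast a) t = []) -> asent a = [] -> aout a = [] ->
  let r := exec Vagg (map msg (trip D)) PROG a in
  asent r = [] /\
  (forall o, In o (aout r) <-> exists x y c', o = [AData x; AData y; AData c'] /\ in_Q D x y c') /\
  exists L, NoDup L /\ (forall p, In p L -> In p (dbR D)) /\
    acost r <= acost a + 10 + 60 * length (trip D) +
      10 * list_sum (map (fun p => Nat.min (cS (dbS D) (snd p)) (cT (dbT D) (fst p))) L).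
Proof.
  intros Ht Hs Ho. cbv zeta. rewrite PROG_agg.
  set (a0 := charge 1 (charge 4 a)).
  destruct (loop1 Vagg (map msg (trip D)) (trip D) a0) as (H1&H2&H3&H4&H5&H6&H7&H8).
  cbv zeta in *. set (a1 := fold_left (step1 Vagg (map msg (trip D))) (map msg (trip D)) a0) in *.
  set (a1' := charge 1 a1).
  assert (Ht0 : forall t, tabs (ast a0) t = []) by exact Ht.
  assert (G0 : forall k, tlookup (tabs (ast a1') 0) k = F0 (trip D) k) by (intros k; simpl; rewrite H4, Ht0; auto).
  assert (G1 : forall k, tlookup (tabs (ast a1') 1) k = F1 (trip D) k) by (intros k; simpl; rewrite H5, Ht0; auto).
  assert (G2 : forall k, memb (tabs (ast a1') 2) k = M2 (trip D) k) by (intros k; simpl; rewrite H6, Ht0; auto).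
  assert (G4 : forall k, memb (tabs (ast a1') 4) k = M4 (trip D) k) by (intros k; simpl; rewrite H7, Ht0; auto).
  assert (G3 : tabs (ast a1') 3 = []) by (simpl; rewrite H8; apply Ht0).
  destruct (loop2 Vagg (map msg (trip D)) (tabs (ast a1') 0) (tabs (ast a1') 1) (tabs (ast a1') 2) (tabs (ast a1') 4)
     (trip D) a1' eq_refl eq_refl eq_refl eq_refl) as (K1&K2&L&KL1&KL2&KL3).
  cbv zeta in *.
  split; [rewrite K1; simpl; rewrite H1; exact Hs|]. split.
  - intros o. rewrite K2. simpl aout. rewrite H2. unfold a0; simpl aout. rewrite Ho. split.
    + intros [[]|(x&y&c&Hi&Hm&Hj&Hoo)].
      rewrite (jc_char D _ _ _ _ x y c G0 G1 G2 G4) in Hj. destruct Hj as (c'&->&HS&HT).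
      exists x, y, c'; split; auto. apply R_trip in Hi. repeat split; auto.
    + intros (x&y&c'&->&HR&HS&HT). right. exists x, y, (AData c'). split; [apply R_trip; auto|].
      split; [rewrite G3; reflexivity|]. split; auto.
      rewrite (jc_char D _ _ _ _ x y _ G0 G1 G2 G4). eauto.
  - exists L. split; auto. split.
    + intros p Hp. destruct (KL2 p Hp) as [Hi _]. apply R_trip in Hi. destruct p; auto.
    + assert (Esum : list_sum (map (fun p => Nat.min (sx (tabs (ast a1') 0) (snd p)) (ty (tabs (ast a1') 1) (fst p))) L)
                   = list_sum (map (fun p => Nat.min (cS (dbS D) (snd p)) (cT (dbT D) (fst p))) L)).
      { f_equal. apply map_ext. intros p. unfold sx, ty. rewrite G0, G1, length_F0, length_F1. auto. }
      rewrite Esum in KL3. unfold a1' in KL3; simpl acost in KL3. unfold a0 in H3; simpl acost in H3. unfold a1'. lia.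
Qed.

Definition tupv (v : vinfo) := exists i l x y l1 l2, v = mkV (VTup i) l [x;y] [(l1, VAttr x); (l2, VAttr y)] /\
   (l = LR \/ l = LS \/ l = LT).
Definition attrv (v : vinfo) := exists a es, v = mkV (VAttr a) LAttr [a] es.

Lemma in_map_combine {A B} (g : nat * A -> B) k l v : In v (map g (combine (seq k (length l)) l)) ->
  exists i x, v = g (i, x) /\ In x l.
Proof.
  revert k; induction l as [|x l IH]; intros k; simpl; [intros []|].
  intros [H|H]; [exists k, x; auto|]. destruct (IH (S k) H) as (i&y&->&Hy); exists i, y; auto.
Qed.

Lemma map_combine_seq {A B} (g : nat * A -> B) (f : A -> B) k l : (forall i x, g (i, x) = f x) ->
  map g (combine (seq k (length l)) l) = map f l.
Proof. intros H; revert k; induction l as [|x l IH]; intros k; simpl; auto. rewrite H, IH; auto. Qed.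

Lemma TV_shape D v : In v (tuple_vertices D) -> tupv v.
Proof.
  unfold tuple_vertices. rewrite !in_app_iff. intros [H|[H|H]]; apply in_map_combine in H as (i&[x y]&->&_);
  (do 6 eexists; split; [reflexivity| auto]).
Qed.

Definition hv (v : vinfo) : lab * nat * nat := (vkind v, nth 0 (vfields v) 0, nth 1 (vfields v) 0).

Lemma TV_msgs D : map hv (tuple_vertices D) = trip D.
Proof.
  unfold tuple_vertices, trip. rewrite !map_app, !map_map.
  rewrite (map_combine_seq _ (fun p => (LR, fst p, snd p))), (map_combine_seq _ (fun p => (LS, fst p, snd p))),
    (map_combine_seq _ (fun p => (LT, fst p, snd p))); auto; intros i [x y]; reflexivity.
Qed.

Lemma length_trip D : length (trip D) = length (dbR D) + length (dbS D) + length (dbT D).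
Proof. unfold trip; rewrite !length_app, !length_map; lia. Qed.

Lemma length_TV D : length (tuple_vertices D) = length (trip D).
Proof. rewrite <- TV_msgs, length_map; auto. Qed.

Lemma AV_shape D v : In v (attr_vertices D) -> attrv v.
Proof. unfold attr_vertices. intros H; apply in_map_iff in H as (a&<-&_). do 2 eexists; reflexivity. Qed.

Lemma nodup_nat_length l : length (nodup_nat l) <= length l.
Proof. induction l; simpl; auto. destruct (existsb _ _); simpl; lia. Qed.

Lemma length_flat_map' {A B} (f : A -> list B) l : length (flat_map f l) = list_sum (map (fun x => length (f x)) l).
Proof. induction l; simpl; auto. rewrite length_app, IHl; auto. Qed.

Lemma list_sum_bound {A} (f : A -> nat) c l : (forall x, In x l -> f x <= c) -> list_sum (map f l) <= c * length l.
Proof. induction l as [|z l IHl]; simpl; intros H; [lia|]. specialize (H z (or_introl eq_refl)) as H'. specialize (IHl (fun x Hx => H x (or_intror Hx))). lia. Qed.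

Lemma length_AV D : length (attr_vertices D) <= 2 * length (trip D).
Proof.
  unfold attr_vertices, adom. rewrite length_map. eapply Nat.le_trans; [apply nodup_nat_length|].
  rewrite length_map. unfold tag_edges. rewrite length_flat_map', <- length_TV.
  apply (list_sum_bound _ 2). intros v Hv. apply TV_shape in Hv as (i&l&x&y&l1&l2&->&_). simpl; lia.
Qed.

Definition R0 (v : vinfo) := exec v [] PROG (mkAcc init_lstate [] [] 0).

Lemma R0_tup v : tupv v -> asent (R0 v) = [(AVid (VAgg 0), msg (hv v))] /\ aout (R0 v) = [] /\ acost (R0 v) <= 40.
Proof. intros (i&l&x&y&l1&l2&->&[->|[->| ->]]); simpl; repeat split; lia. Qed.

Lemma R0_attr v : attrv v -> asent (R0 v) = [] /\ aout (R0 v) = [] /\ acost (R0 v) <= 40.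
Proof. intros (a&es&->); simpl; repeat split; lia. Qed.

Lemma R0_agg : asent (R0 Vagg) = [] /\ aout (R0 Vagg) = [] /\ acost (R0 Vagg) <= 40 /\ (forall t, tabs (ast (R0 Vagg)) t = []).
Proof. simpl; repeat split; lia. Qed.

Lemma ss1 vs : superstep P0 true [] vs (map (fun _ => init_lstate) vs) =
  (map (fun v => ast (R0 v)) vs, flat_map (fun v => asent (R0 v)) vs,
   flat_map (fun v => aout (R0 v)) vs, list_sum (map (fun v => acost (R0 v)) vs)).
Proof. induction vs as [|v vs IH]; simpl; auto. rewrite IH. reflexivity. Qed.

Definition f3 (x : list lstate * list (atom * list atom) * list (list atom) * nat) :=
  (snd (fst (fst x)), snd (fst x), snd x).

Lemma ss_skip msgs vs1 sts1 vs2 sts2 : length sts1 = length vs1 ->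
  (forall v, In v vs1 -> inbox_of v msgs = []) ->
  f3 (superstep P0 false msgs (vs1 ++ vs2) (sts1 ++ sts2)) = f3 (superstep P0 false msgs vs2 sts2).
Proof.
  revert sts1; induction vs1 as [|v vs1 IH]; intros [|st sts1]; simpl; try discriminate; auto.
  intros Hl Hi. rewrite (Hi v (or_introl eq_refl)). simpl.
  specialize (IH sts1 ltac:(lia) (fun w Hw => Hi w (or_intror Hw))).
  destruct (superstep P0 false msgs (vs1 ++ vs2) (sts1 ++ sts2)) as [[[a b] c] d].
  destruct (superstep P0 false msgs vs2 sts2) as [[[a' b'] c'] d']. exact IH.
Qed.

Lemma flat_map_single {A B} (f : A -> list B) g l : (forall x, In x l -> f x = [g x]) -> flat_map f l = map g l.
Proof. induction l; simpl; intros H; auto. rewrite H by auto. rewrite IHl; auto. Qed.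

Lemma flat_map_nil {A B} (f : A -> list B) l : (forall x, In x l -> f x = []) -> flat_map f l = [].
Proof. induction l; simpl; intros H; auto. rewrite H by auto. rewrite IHl; auto. Qed.

Lemma inbox_other v L : (forall k, vself v <> VAgg k) ->
  inbox_of v (map (fun m => (AVid (VAgg 0), msg m)) L) = [].
Proof.
  intros H. unfold inbox_of. induction L; simpl; auto.
  destruct (atom_eqb _ _) eqn:E; auto. apply atom_eqb_spec in E. exfalso; apply (H 0); congruence.
Qed.

Lemma inbox_agg L : inbox_of Vagg (map (fun m => (AVid (VAgg 0), msg m)) L) = map msg L.
Proof. unfold inbox_of. induction L; simpl; auto. f_equal. exact IHL. Qed.

Lemma run_two vs sts0 sts1 s1 s1s o1 c1 sts2 o2 c2 :
  superstep P0 true [] vs sts0 = (sts1, s1 :: s1s, o1, c1) ->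
  superstep P0 false (s1 :: s1s) vs sts1 = (sts2, [], o2, c2) ->
  run 2 P0 vs true sts0 [] = Some (o1 ++ o2, length (s1 :: s1s), c1 + c2).
Proof. intros H1 H2. simpl. rewrite H1, H2. rewrite Nat.add_0_r. reflexivity. Qed.

Lemma run_one vs sts0 sts1 o1 c1 :
  superstep P0 true [] vs sts0 = (sts1, [], o1, c1) ->
  run 1 P0 vs true sts0 [] = Some (o1, 0, c1).
Proof. intros H1. simpl. rewrite H1. reflexivity. Qed.

Lemma ss_agg msgs st : inbox_of Vagg msgs <> [] ->
  superstep P0 false msgs [Vagg] [st] =
  ([ast (exec Vagg (inbox_of Vagg msgs) PROG (mkAcc st [] [] 0))],
   asent (exec Vagg (inbox_of Vagg msgs) PROG (mkAcc st [] [] 0)) ++ [],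
   aout (exec Vagg (inbox_of Vagg msgs) PROG (mkAcc st [] [] 0)) ++ [],
   acost (exec Vagg (inbox_of Vagg msgs) PROG (mkAcc st [] [] 0)) + 0).
Proof. intros H. cbn [superstep orb negb]. destruct (inbox_of Vagg msgs) eqn:E; [congruence|]. reflexivity. Qed.

Lemma sq_le a b : (a + b) * (a + b) <= 2 * (a * a) + 2 * (b * b).
Proof.
  destruct (Nat.le_ge_cases a b) as [H|H].
  - destruct (Nat.le_exists_sub a b H) as (d&->&_). nia.
  - destruct (Nat.le_exists_sub b a H) as (d&->&_). nia.
Qed.

Lemma fin1 IN c1 : 1 <= IN -> c1 <= 40*(9*IN+1) -> c1^2 <= 1000*1000*IN^3.
Proof.
  intros H1 H2. assert (H3 : c1 <= 400*IN) by lia.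
  assert (H4 : c1*c1 <= (400*IN)*(400*IN)) by (apply Nat.mul_le_mono; auto).
  assert (H5 : IN*IN <= IN^3) by (rewrite Nat.pow_succ_r', Nat.pow_2_r; nia).
  rewrite Nat.pow_2_r. lia.
Qed.
Lemma fin2 IN X c : 1 <= IN -> X*X <= 16*IN^3 -> c <= 600*IN + 10*X -> c^2 <= 1000*1000*IN^3.
Proof.
  intros H1 H2 H3.
  assert (H4 : c*c <= (600*IN + 10*X)*(600*IN + 10*X)) by (apply Nat.mul_le_mono; auto).
  assert (H5 : IN*IN <= IN^3) by (rewrite Nat.pow_succ_r', Nat.pow_2_r; nia).
  assert (H6 : 2*(600*IN)*(10*X) <= (600*IN)*(600*IN) + (10*X)*(10*X)).
  { destruct (Nat.le_ge_cases (600*IN) (10*X)) as [H|H].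
    - destruct (Nat.le_exists_sub _ _ H) as (d&Hd&_). rewrite Hd. nia.
    - destruct (Nat.le_exists_sub _ _ H) as (d&Hd&_). rewrite Hd. nia. }
  rewrite Nat.pow_2_r. lia.
Qed.
Lemma fin3 IN n : 1 <= IN -> n <= 3*IN -> n^2 <= 1000*1000*IN^3.
Proof.
  intros H1 H2. assert (H4 : n*n <= (3*IN)*(3*IN)) by (apply Nat.mul_le_mono; auto).
  assert (H5 : IN*IN <= IN^3) by (rewrite Nat.pow_succ_r', Nat.pow_2_r; nia).
  rewrite Nat.pow_2_r. lia.
Qed.

Theorem mainTheorem5 :
  exists (P : program) (c : nat),
    forall (IN : nat) (D : db),
      0 < IN ->
      length (dbR D) <= IN -> length (dbS D) <= IN -> length (dbT D) <= IN ->
      exists (outs : list (list atom)) (comm comp : nat),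
        runs_on P D outs comm comp /\
        (forall t, In t outs <->
                   exists a b c', t = [AData a; AData b; AData c'] /\ in_Q D a b c') /\
        comm ^ 2 <= c * IN ^ 3 /\
        comp ^ 2 <= c * IN ^ 3.
Proof.
  exists P0, (1000 * 1000). intros IN D HIN HR HS HT.
  assert (Hvs : all_vertices P0 D = (tuple_vertices D ++ attr_vertices D) ++ [Vagg])
    by (unfold all_vertices; rewrite app_assoc; reflexivity).
  set (vs := all_vertices P0 D) in *.
  pose proof (ss1 vs) as E1.
  assert (Hsent : flat_map (fun v => asent (R0 v)) vs = map (fun m => (AVid (VAgg 0), msg m)) (trip D)).
  { rewrite Hvs, !flat_map_app.
    rewrite (flat_map_single _ (fun v => (AVid (VAgg 0), msg (hv v))) (tuple_vertices D)).
    2: { intros v Hv. apply (proj1 (R0_tup v (TV_shape D v Hv))). }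
    rewrite (flat_map_nil _ (attr_vertices D)). 2: { intros v Hv. apply (proj1 (R0_attr v (AV_shape D v Hv))). }
    cbn [flat_map]. rewrite (proj1 R0_agg). rewrite <- TV_msgs, map_map, !app_nil_r. reflexivity. }
  assert (Hout : flat_map (fun v => aout (R0 v)) vs = []).
  { apply flat_map_nil. intros v Hv. rewrite Hvs in Hv. rewrite !in_app_iff in Hv.
    destruct Hv as [[Hv|Hv]|[<-|[]]].
    - apply (proj1 (proj2 (R0_tup v (TV_shape D v Hv)))).
    - apply (proj1 (proj2 (R0_attr v (AV_shape D v Hv)))).
    - apply (proj1 (proj2 R0_agg)). }
  assert (Hc1 : list_sum (map (fun v => acost (R0 v)) vs) <= 40 * (9 * IN + 1)).
  { eapply Nat.le_trans. apply (list_sum_bound _ 40).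
    - intros v Hv. rewrite Hvs in Hv. rewrite !in_app_iff in Hv.
      destruct Hv as [[Hv|Hv]|[<-|[]]].
      + apply (proj2 (proj2 (R0_tup v (TV_shape D v Hv)))).
      + apply (proj2 (proj2 (R0_attr v (AV_shape D v Hv)))).
      + apply (proj1 (proj2 (proj2 R0_agg))).
    - rewrite Hvs, !length_app. pose proof (length_AV D). pose proof (length_TV D). pose proof (length_trip D).
      simpl. lia. }
  rewrite Hsent, Hout in E1.
  set (c1 := list_sum (map (fun v => acost (R0 v)) vs)) in *.
  destruct (trip D) as [|m0 ms] eqn:Etrip.
  -
    exists [], 0, c1. split; [exists 1; apply (run_one _ _ _ _ _ E1)|]. split.
    + intros t; split; [intros []|]. intros (a&b&c'&_&HRi&_).
      assert (HR0 : dbR D = []). { pose proof (length_trip D) as L. rewrite Etrip in L. simpl in L.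
        destruct (dbR D); simpl in *; auto; lia. }
      rewrite HR0 in HRi; destruct HRi.
    + split; [apply fin3; lia|]. apply fin1; lia.
  - set (sts1 := map (fun v => ast (R0 v)) vs) in *.
    set (r2 := exec Vagg (map msg (trip D)) PROG (mkAcc (ast (R0 Vagg)) [] [] 0)).
    destruct (agg_run D (mkAcc (ast (R0 Vagg)) [] [] 0) (proj2 (proj2 (proj2 R0_agg))) eq_refl eq_refl)
      as (A1&A2&L&AL1&AL2&AL3).
    cbv zeta in A1, A2, AL3. fold r2 in A1, A2, AL3. try rewrite Etrip in A1. try rewrite Etrip in A2. try rewrite Etrip in AL3.
    assert (E2 : f3 (superstep P0 false (map (fun m => (AVid (VAgg 0), msg m)) (m0 :: ms)) vs sts1) =
                 (asent r2 ++ [], aout r2 ++ [], acost r2 + 0)).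
    { unfold sts1. rewrite Hvs, map_app. rewrite ss_skip.
      - change (map (fun v : vinfo => ast (R0 v)) [Vagg]) with [ast (R0 Vagg)]. rewrite ss_agg by (rewrite inbox_agg; discriminate). rewrite inbox_agg. unfold r2. rewrite Etrip. reflexivity.
      - rewrite length_map; auto.
      - intros v Hv. apply inbox_other. rewrite in_app_iff in Hv. destruct Hv as [Hv|Hv].
        + apply TV_shape in Hv as (i&l&x&y&l1&l2&->&_); simpl; congruence.
        + apply AV_shape in Hv as (a&es&->); simpl; congruence. }
    rewrite A1 in E2.
    destruct (superstep P0 false (map (fun m => (AVid (VAgg 0), msg m)) (m0 :: ms)) vs sts1) as [[[st2 s2] o2] cc2] eqn:E2'.
    unfold f3 in E2; cbn [fst snd] in E2. injection E2 as -> -> ->.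
    exists ([] ++ (aout r2 ++ [])), (length (map (fun m => (AVid (VAgg 0), msg m)) (m0 :: ms))), (c1 + (acost r2 + 0)).
    split; [exists 2; exact (run_two _ _ _ _ _ _ _ _ _ _ E1 E2')|].
    split.
    + intros t. rewrite app_nil_l, app_nil_r. apply A2.
    + assert (Hlt : length (m0 :: ms) <= 3 * IN) by (rewrite <- Etrip, length_trip; lia).
      assert (HL : length L <= IN).
      { eapply Nat.le_trans; [apply NoDup_incl_length; [exact AL1| exact AL2]|exact HR]. }
      pose proof (key_bound L (dbS D) (dbT D) IN AL1 HL HS HT HIN) as KB. cbv zeta in KB.
      set (X := list_sum (map (fun p => Nat.min (cS (dbS D) (snd p)) (cT (dbT D) (fst p))) L)) in *.
      simpl acost in AL3.
      rewrite length_map. split.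
      * apply fin3; lia.
      * apply (fin2 IN X); [lia|exact KB|lia].
Qed.
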